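(* Let $d,e,r\geq 2$ be integers, and let $S(d,e,r)$ be the smallest set of positive integers such that (a) $r\in S$; (b) $n\in S$ whenever $n^e\in S$; (c) $(n+d)^e\in S$ whenever $n\in S$. Then $$S(d,e,r)=\{n\geq 2 : n\not\equiv 0 \pmod d\}$$ if and only if all of the following hold: (1) $d=p$ is prime; (2) $r\not\equiv 0\pmod p$; (3) $e$ is a multiple of the radical of $p-1$, i.e. if $p-1=p_1^{n_1}\cdots p_k^{n_k}$ with distinct primes $p_i$ and $n_i\geq 1$, then $p_1p_2\cdots p_k \mid e$.
   Context: ''Smallest'' means contained in every set of positive integers satisfying (a), (b), (c). The set $S(d,e,r)$ is called a maximal solution when it equals $\{n\geq 2 : n\not\equiv 0 \pmod d\}$. *)

(* Defs.v *)
From mathcomp Require Import all_boot.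
Set Implicit Arguments. Unset Strict Implicit. Unset Printing Implicit Defensive.

Definition S_closed (d e r : nat) (T : nat -> Prop) : Prop :=
  (forall n, T n -> 0 < n) /\
  T r /\
  (forall n, 0 < n -> T (n ^ e) -> T n) /\
  (forall n, T n -> T ((n + d) ^ e)).

Definition S_set (d e r : nat) (n : nat) : Prop :=
  forall T : nat -> Prop, S_closed d e r T -> T n.

(* Radical of n: product of the distinct primes dividing n (rad 1 = 1). *)
Definition rad (n : nat) : nat := \prod_(q <- primes n) q.

(* Main.v *)
From Pilot Require Import Defs.
From mathcomp Require Import all_boot all_algebra all_fingroup all_solvable.
From mathcomp Require Import zify.
Set Implicit Arguments. Unset Strict Implicit. Unset Printing Implicit Defensive.

Section SS.
Variables (d e r : nat).
Hypotheses (hd : 2 <= d) (he : 2 <= e) (hr : 2 <= r).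

Lemma S_pos n : S_set d e r n -> 0 < n.
Proof.
move=> /(_ (fun n => 0 < n)); apply; split; first by [].
split; first by lia.
split; first by [].
by move=> n0 _; rewrite expn_gt0; apply/orP; left; lia.
Qed.

Lemma S_closedS : S_closed d e r (S_set d e r).
Proof.
split; first exact: S_pos.
split; first by move=> T [_ [] ].
split.
  by move=> n n0 H T HT; case: (HT) => _ [_ [Hb _]]; apply: Hb => //; exact: H.
by move=> n H T HT; case: (HT) => _ [_ [_ Hc]]; apply: Hc; exact: H.
Qed.

Lemma S_min T n : S_closed d e r T -> S_set d e r n -> T n.
Proof. by move=> HT H; exact: H. Qed.

Lemma S_addd n : S_set d e r n -> S_set d e r (n + d).
Proof.
move=> H; case: S_closedS => _ [_ [Hb Hc]].
apply: Hb; first by lia.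
exact: Hc.
Qed.

Lemma S_addk n k : S_set d e r n -> S_set d e r (n + k * d).
Proof.
move=> H; elim: k => [|k IH]; first by rewrite mul0n addn0.
by rewrite mulSn addnCA addnC; apply: S_addd IH.
Qed.

Lemma S_down n j : 0 < n -> S_set d e r (n ^ (e ^ j)) -> S_set d e r n.
Proof.
move=> n0; elim: j => [|j IH]; first by rewrite expn0 expn1.
move=> H; apply: IH; case: S_closedS => _ [_ [Hb Hc]].
apply: Hb; first by rewrite expn_gt0 n0.
by rewrite -expnM -expnSr.
Qed.

Lemma S_iter k : S_set d e r (iter k (fun x => (x + d) ^ e) r).
Proof.
elim: k => [|k IH] /=; first by case: S_closedS => _ [].
by case: S_closedS => _ [_ [_ Hc]]; apply: Hc.
Qed.

End SS.

Lemma iter_mod p e r k : iter k (fun x => (x + p) ^ e) r = r ^ (e ^ k) %[mod p].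
Proof.
elim: k => [|k IH] /=; first by rewrite expn0 expn1.
rewrite -modnXm modnDr modnXm -modnXm IH modnXm -expnM -expnSr //.
Qed.

Lemma fermat_pow p x k : prime p -> ~~ (p %| x) -> p.-1 %| k -> x ^ k = 1 %[mod p].
Proof.
move=> pp px /dvdnP [c ->].
have cx : coprime x p by rewrite coprime_sym prime_coprime.
have := Euler_exp_totient cx; rewrite totient_prime // => E.
by rewrite mulnC expnM -modnXm E modnXm exp1n.
Qed.
Lemma key p l m e x : prime p -> prime l -> m * l = p.-1 -> ~~ (l %| e) -> 0 < e ->
  ~~ (p %| x) -> ((x ^ e) ^ m %% p == 1) = (x ^ m %% p == 1).
Proof.
move=> pp pl ml le e0 px.
have p1 : 1 %% p = 1 by rewrite modn_small // prime_gt1.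
rewrite expnAC; set y := x ^ m.
have yl : y ^ l = 1 %[mod p] by rewrite /y -expnM ml; apply: fermat_pow.
clearbody y; apply/idP/idP; last first.
  by move/eqP=> E; rewrite -modnXm E exp1n p1.
move/eqP=> E.
have [a _ ha] := Bezoutl l e0.
have g1 : gcdn e l = 1 by apply/eqP; have : coprime e l by rewrite coprime_sym prime_coprime.
rewrite g1 in ha; case/dvdnP: ha => k hk.
have : y * (y ^ l) ^ a = (y ^ e) ^ k by rewrite -!expnM -expnS -add1n [l * a]mulnC hk mulnC.
move/(congr1 (modn^~ p)); rewrite -modnMm -modnXm yl modnXm exp1n p1 muln1.
by rewrite -modnXm E exp1n p1 modn_mod => ->.
Qed.

Lemma prod_dvd (s : seq nat) e : uniq s -> all prime s -> all (dvdn^~ e) s ->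
  \prod_(q <- s) q %| e.
Proof.
elim: s => [|q s IH] /=; first by rewrite big_nil dvd1n.
case/andP=> qs us /andP [pq ps] /andP [qe se].
rewrite big_cons Gauss_dvd ?qe ?IH //.
rewrite prime_coprime // Euclid_dvd_prod // big_has; apply/hasPn => x xs /=.
have px : prime x by move/allP: ps; apply.
rewrite dvdn_prime2 //; apply/negP => /eqP qx; move: qs; rewrite qx xs.
by [].
Qed.

Lemma dvd_pow_exists n e : 0 < n -> (forall q, q \in primes n -> q %| e) ->
  exists K, n %| e ^ K.
Proof.
move=> n0 H; rewrite (prod_prime_decomp n0) prime_decompE big_map /=.
elim: (primes n) H => [|q s IH] H; first by exists 0; rewrite big_nil.
have [K hK] : exists K, \prod_(j <- s) j ^ logn j n %| e ^ K.
  by apply: IH => x xs; apply: H; rewrite inE xs orbT.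
exists (logn q n + K); rewrite big_cons expnD dvdn_mul //.
by rewrite dvdn_exp2r // H // inE eqxx.
Qed.
Import GRing.Theory.
Lemma nonres p m : prime p -> 0 < m -> m < p.-1 ->
  ~ (forall n, 0 < n < p -> n ^ m %% p = 1).
Proof.
move=> pp m0 mlt H.
pose rs : seq 'F_p := [seq (i%:R)%R | i <- iota 1 p.-1].
have := @max_poly_roots _ ('X^m - 1)%R rs.
rewrite size_Xn_sub_1 // size_map size_iota.
have -> : ('X^m - 1 : {poly 'F_p})%R != 0%R.
  by rewrite -size_poly_eq0 size_Xn_sub_1.
have -> : all (root ('X^m - 1)%R) rs.
  apply/allP => x /mapP [i]; rewrite mem_iota => hi ->.
  rewrite /root !hornerE -natrX.
  have E : ((i ^ m)%:R : 'F_p)%R = ((1%N)%:R)%R.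
    by rewrite -Fp_nat_mod // H //; lia.
  by rewrite E subrr.
have -> : uniq rs.
  rewrite map_inj_in_uniq ?iota_uniq // => i j; rewrite !mem_iota => hi hj E.
  have := congr1 (@nat_of_ord _) E; rewrite !val_Fp_nat // !modn_small //; lia.
move=> /(_ isT isT isT); lia.
Qed.

Import Pilot.Defs.

Lemma modDpow n d k : (n + d) ^ k %% d = n ^ k %% d.
Proof. by rewrite -modnXm modnDr modnXm. Qed.

Theorem theorem17 (d e r : nat) (hd : 2 <= d) (he : 2 <= e) (hr : 2 <= r) :
  (forall n : nat, S_set d e r n <-> (2 <= n /\ ~~ (d %| n))) <->
  [/\ prime d, ~~ (d %| r) & rad d.-1 %| e].
Proof.
have e0 : 0 < e by lia.
split.
- move=> HS.
  have Sr : S_set d e r r by case: (S_closedS hd he hr) => _ [].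
  have [_ dr] := (HS r).1 Sr.
  have pd : prime d.
    apply/negPn/negP => /primePn [|[a /andP [a1 ad] adv]]; first by lia.
    have pq : prime (pdiv a) := pdiv_prime a1.
    have qd : pdiv a %| d := dvdn_trans (pdiv_dvd a) adv.
    have qa : pdiv a <= a by apply: pdiv_leq; lia.
    pose T := fun n => 0 < n /\ (pdiv a %| n) = (pdiv a %| r).
    have HT : S_closed d e r T.
      split; first by move=> n [].
      split; first by split => //; lia.
      split.
        by move=> n n0 [_ h]; split => //; rewrite -h Euclid_dvdX // e0 andbT.
      move=> n [n0 h]; split; first by rewrite expn_gt0 addn_gt0 n0.
      by rewrite Euclid_dvdX // e0 andbT (dvdn_addl _ qd).
    have Tq : T (pdiv a).
      apply: (S_min HT); apply/(HS _); split; first exact: prime_gt1.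
      apply/negP => /dvdn_leq; have := prime_gt1 pq; lia.
    have Td : T (d + 1).
      apply: (S_min HT); apply/(HS _); split; first by lia.
      by rewrite dvdn_addr // dvdn1; lia.
    case: Tq => _; case: Td => _; rewrite dvdnn => <-.
    rewrite dvdn_addr // dvdn1 => /eqP q1; have := prime_gt1 pq; lia.
  split => //.
  rewrite /rad; apply: prod_dvd; first exact: primes_uniq.
    by apply/allP=> q; rewrite mem_primes => /andP [].
  apply/allP => l; rewrite mem_primes => /and3P [pl p0 lp].
  apply/negPn/negP => le.
  pose m := d.-1 %/ l.
  have ml : m * l = d.-1 by rewrite divnK.
  have l2 := prime_gt1 pl.
  have m0 : 0 < m by nia.
  have mlt : m < d.-1 by nia.
  apply: (nonres pd m0 mlt) => n /andP [n0 np].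
  pose T := fun n => 0 < n /\ ~~ (d %| n) /\ (n ^ m %% d == 1) = (r ^ m %% d == 1).
  have HT : S_closed d e r T.
    split; first by move=> n1 [].
    split; first by split; [lia | split].
    split.
      move=> k k0 [_ [kd h]].
      have kd' : ~~ (d %| k) by move: kd; rewrite Euclid_dvdX // e0 andbT.
      by split => //; split => //; rewrite -h (key pd pl ml le e0 kd').
    move=> k [k0 [kd h]]; split; first by rewrite expn_gt0 addn_gt0 k0.
    split; first by rewrite Euclid_dvdX // e0 andbT dvdn_addl.
    by rewrite -expnM modDpow expnM (key pd pl ml le e0 kd).
  have d1 : 1 %% d = 1 by rewrite modn_small.
  have Td : T (d + 1) by apply: (S_min HT); apply/(HS _); split; [lia | rewrite dvdn_addr // dvdn1; lia].
  case: (ltngtP n 1) => [|n1|->]; [lia| |by rewrite exp1n].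
  have Tn : T n.
    apply: (S_min HT); apply/(HS _); split => //.
    by apply/negP => /dvdn_leq; lia.
  apply/eqP; case: Tn => _ [_ ->]; case: Td => _ [_ <-].
  by rewrite (addnC d 1) modDpow exp1n d1.
- case=> pd dr rade n; split.
  + move=> Sn; apply: (S_min (T := fun k => 1 < k /\ ~~ (d %| k)) _ Sn); split; first by move=> k [] k2; lia.
    split; first by [].
    split.
      move=> k k0 [k2 kd]; split.
        case: (ltngtP k 1) k2 => [|k1|->]; [lia|lia|by rewrite exp1n].
      by move: kd; rewrite Euclid_dvdX // e0 andbT.
    move=> k [k2 kd]; split.
      have := ltn_expl e (_ : 1 < k + d); lia.
    by rewrite Euclid_dvdX // e0 andbT dvdn_addl.
  + case=> n2 dn.
    have [K0 hK0] : exists K, d.-1 %| e ^ K.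
      apply: dvd_pow_exists; first by lia.
      move=> q qp; apply: dvdn_trans rade; rewrite /rad (big_rem q qp) /=.
      exact: dvdn_mulr.
    have Sm0 := S_iter hd he hr K0.
    set m0 := iter K0 _ r in Sm0.
    have m0mod : m0 = 1 %[mod d] by rewrite /m0 iter_mod; apply: fermat_pow.
    have hK : d.-1 %| e ^ (K0 + m0) by rewrite expnD dvdn_mulr.
    have Nmod : n ^ (e ^ (K0 + m0)) = 1 %[mod d] by apply: fermat_pow.
    have NK : m0 < n ^ (e ^ (K0 + m0)).
      have h1 := ltn_expl (K0 + m0) he.
      have h2 := ltn_expl (e ^ (K0 + m0)) n2.
      exact: leq_ltn_trans (leq_addl K0 m0) (ltn_trans h1 h2).
    apply: (S_down hd he hr (j := K0 + m0)); first by lia.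
    have dv : d %| n ^ (e ^ (K0 + m0)) - m0.
      by rewrite -eqn_mod_dvd ?(ltnW NK) // Nmod m0mod.
    rewrite -(subnK (ltnW NK)) addnC -(divnK dv).
    exact: S_addk.
Qed.
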